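(* For every constant $\varepsilon>0$ there exists an online algorithm for $\textsc{Online-Sorting}[1+\varepsilon,n]$ with competitive ratio $2^{O(\sqrt{\log n\,\log\log n})}$, i.e., whose cost on every stream of $n$ reals in $[0,1]$ is at most $2^{O(\sqrt{\log n\log\log n})}$.
   Context: $\textsc{Online-Sorting}[\gamma,n]$ (for $\gamma\ge 1$): there is an array $A$ consisting of $\gamma n$ initially empty cells, ordered from left to right. A stream of $n$ reals $s_1,\dots,s_n\in[0,1]$ arrives one at a time. An online algorithm must place each $s_i$ into an empty cell of $A$, irrevocably, before $s_{i+1}$ is revealed. After all reals are placed, let $r_1,\dots,r_n$ be the reals in left-to-right order in $A$, with $r_0:=0$, $r_{n+1}:=1$; the cost is $\sum_{i=0}^{n}|r_{i+1}-r_i|$. The offline optimum has cost exactly $1$, so an algorithm has competitive ratio $\Delta$ if its cost is at most $\Delta$ on every stream of $n$ reals. *)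

(* Defs.v *)
From Stdlib Require Import Reals Lra Lia List ZArith.
Import ListNotations.
Open Scope R_scope.

(* A deterministic online algorithm: given the history of previously revealed
   reals (in order) and the current real, it returns the (0-based) index of
   the cell in which the current real is placed.  Since the algorithm is
   deterministic, the history of reals determines all earlier placements. *)
Definition online_alg := list R -> R -> nat.

Fixpoint positions (A : online_alg) (hist : list R) (s : list R) : list nat :=
  match s with
  | nil => nil
  | x :: t => A hist x :: positions A (hist ++ [x]) t
  end.

(* Placement is legal in an array of [m] cells: every chosen cell exists and
   no cell is used twice (each real goes into an empty cell). *)
Definition valid_run (A : online_alg) (m : nat) (s : list R) : Prop :=
  NoDup (positions A nil s) /\ Forall (fun j => (j < m)%nat) (positions A nil s).

Fixpoint cell_content (ps : list (nat * R)) (j : nat) : option R :=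
  match ps with
  | nil => None
  | (k, x) :: t => if Nat.eqb k j then Some x else cell_content t j
  end.

Definition arranged (m : nat) (ps : list (nat * R)) : list R :=
  flat_map (fun j => match cell_content ps j with Some x => [x] | None => [] end)
           (seq 0 m).

Fixpoint cost_from (prev : R) (l : list R) : R :=
  match l with
  | nil => Rabs (1 - prev)
  | x :: t => Rabs (x - prev) + cost_from x t
  end.

(* Cost of running [A] on stream [s] with [m] cells (r_0 = 0, r_{n+1} = 1). *)
Definition run_cost (A : online_alg) (m : nat) (s : list R) : R :=
  cost_from 0 (arranged m (combine (positions A nil s) s)).

Definition num_cells (gamma : R) (n : nat) : nat :=
  Z.to_nat (Int_part (gamma * INR n)).

(* Main.v *)
Require Import Defs.
From Stdlib Require Import Reals Lra Lia List Bool ZArith.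
Import ListNotations.
Open Scope R_scope.

Definition in01 (x : R) : Prop := 0 <= x <= 1.

Fixpoint tvf (p : R) (l : list R) : R :=
  match l with nil => 0 | x :: t => Rabs (x - p) + tvf x t end.
Definition tv (l : list R) : R := match l with nil => 0 | x :: t => tvf x t end.

Lemma tvf_ge0 : forall l p, 0 <= tvf p l.
Proof. induction l; simpl; intros. lra. pose proof (Rabs_pos (a - p)). pose proof (IHl a). lra. Qed.

Lemma tv_ge0 : forall l, 0 <= tv l.
Proof. destruct l; simpl. lra. apply tvf_ge0. Qed.

Lemma cost_from_le : forall l p, in01 p -> Forall in01 l -> cost_from p l <= tvf p l + 1.
Proof.
  induction l; simpl; intros p Hp Hl.
  - unfold in01 in Hp. rewrite Rabs_right; lra.
  - inversion Hl; subst. specialize (IHl a H1 H2). lra.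
Qed.

Lemma tvf_le_tv : forall l p, in01 p -> Forall in01 l -> tvf p l <= tv l + 1.
Proof.
  destruct l; simpl; intros p Hp Hl. lra.
  inversion Hl; subst. unfold in01 in *.
  assert (Rabs (r - p) <= 1). { apply Rabs_le. lra. } lra.
Qed.

Lemma cost_from_0_le : forall l, Forall in01 l -> cost_from 0 l <= tv l + 2.
Proof.
  intros l Hl. assert (H0 : in01 0) by (unfold in01; lra).
  pose proof (cost_from_le l 0 H0 Hl). pose proof (tvf_le_tv l 0 H0 Hl). lra.
Qed.

Lemma last_cons_eq : forall (l : list R) x p, last (x :: l) p = last l x.
Proof. induction l; intros. reflexivity. change (last (a :: l) p = last (a :: l) x). rewrite !IHl. reflexivity. Qed.

Lemma tvf_app : forall l1 l2 p, tvf p (l1 ++ l2) = tvf p l1 + tvf (last l1 p) l2.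
Proof.
  induction l1; intros; cbn [tvf app]. simpl. lra.
  rewrite IHl1. rewrite last_cons_eq. lra.
Qed.

Lemma last_in01 : forall l p, in01 p -> Forall in01 l -> in01 (last l p).
Proof.
  induction l; simpl; intros p Hp Hl. auto. inversion Hl; subst.
  destruct l. auto. apply IHl; auto.
Qed.

Lemma tv_app : forall l1 l2, Forall in01 l1 -> Forall in01 l2 ->
  tv (l1 ++ l2) <= tv l1 + tv l2 + 1.
Proof.
  intros [|x t] l2 H1 H2; simpl.
  - pose proof (tv_ge0 l2). lra.
  - rewrite tvf_app. inversion H1; subst.
    pose proof (tvf_le_tv l2 (last t x) (last_in01 t x H3 H4) H2). lra.
Qed.

Lemma tv_flat_map {A : Type} : forall (f : A -> list R) (L : list A) F,
  (forall i, In i L -> Forall in01 (f i) /\ tv (f i) <= F) ->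
  tv (flat_map f L) <= INR (length L) * (F + 1).
Proof.
  induction L; intros F H; cbn [flat_map length]. simpl. lra.
  destruct (H a (or_introl eq_refl)) as [Ha1 Ha2].
  assert (Hr : Forall in01 (flat_map f L)).
  { apply Forall_flat_map. apply Forall_forall. intros x Hx. destruct (H x (or_intror Hx)); auto. }
  pose proof (tv_app _ _ Ha1 Hr).
  assert (IH := IHL F (fun i Hi => H i (or_intror Hi))).
  rewrite S_INR. lra.
Qed.

Lemma tvf_map_affine : forall (g : R -> R) a c0 l p, 0 <= a ->
  (forall y, In y l -> g y = a * y - c0) -> tvf (a * p - c0) (map g l) = a * tvf p l.
Proof.
  induction l; simpl; intros p Ha Hg. lra.
  rewrite (Hg a0 (or_introl eq_refl)).
  rewrite (IHl a0 Ha (fun y Hy => Hg y (or_intror Hy))).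
  replace (a * a0 - c0 - (a * p - c0)) with (a * (a0 - p)) by ring.
  rewrite Rabs_mult, (Rabs_right a) by lra. ring.
Qed.

Lemma tv_map_affine : forall (g : R -> R) a c0 l, 0 <= a ->
  (forall y, In y l -> g y = a * y - c0) -> tv (map g l) = a * tv l.
Proof.
  intros g a c0 [|x t] Ha Hg; simpl. ring.
  rewrite (Hg x (or_introl eq_refl)). apply tvf_map_affine; auto.
  intros; apply Hg; simpl; auto.
Qed.

Lemma cc_filter : forall (P : nat * R -> bool) ps j,
  (forall p, In p ps -> fst p = j -> P p = true) ->
  cell_content (filter P ps) j = cell_content ps j.
Proof.
  induction ps as [|[k x] t IH]; simpl; intros j H. auto.
  destruct (Nat.eqb k j) eqn:E.
  - apply Nat.eqb_eq in E. rewrite (H (k, x) (or_introl eq_refl) E). simpl.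
    rewrite <- Nat.eqb_eq in E. rewrite E. auto.
  - destruct (P (k, x)); simpl; [rewrite E|]; apply IH; auto.
Qed.

Lemma cc_map_snd : forall (g : R -> R) ps j,
  cell_content (map (fun p => (fst p, g (snd p))) ps) j = option_map g (cell_content ps j).
Proof.
  induction ps as [|[k x] t IH]; simpl; intros j. auto.
  destruct (Nat.eqb k j); auto.
Qed.

Lemma cc_map_shift : forall a ps r,
  cell_content (map (fun p => (a + fst p, snd p)%nat) ps) (a + r) = cell_content ps r.
Proof.
  induction ps as [|[k x] t IH]; simpl; intros r. auto.
  destruct (Nat.eqb k r) eqn:E.
  - apply Nat.eqb_eq in E; subst. rewrite Nat.eqb_refl. auto.
  - assert (Nat.eqb (a + k) (a + r) = false). { apply Nat.eqb_neq. apply Nat.eqb_neq in E. lia. }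
    rewrite H. auto.
Qed.

Lemma cc_In : forall ps j y, cell_content ps j = Some y -> In (j, y) ps.
Proof.
  induction ps as [|[k x] t IH]; simpl; intros j y H. discriminate.
  destruct (Nat.eqb k j) eqn:E.
  - apply Nat.eqb_eq in E; subst. inversion H; subst. auto.
  - right. auto.
Qed.

Lemma cc_none : forall ps j, (forall p, In p ps -> fst p <> j) -> cell_content ps j = None.
Proof.
  induction ps as [|[k x] t IH]; simpl; intros j H. auto.
  destruct (Nat.eqb k j) eqn:E.
  - apply Nat.eqb_eq in E. exfalso. apply (H (k, x)); auto.
  - apply IH. intros; apply H; auto.
Qed.

Definition opt (o : option R) : list R := match o with Some x => [x] | None => [] end.

Lemma arranged_eq : forall m ps, arranged m ps = flat_map (fun j => opt (cell_content ps j)) (seq 0 m).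
Proof. reflexivity. Qed.

Lemma flat_map_seq_shift {B : Type} : forall b a (f : nat -> list B),
  flat_map f (seq a b) = flat_map (fun r => f (a + r)%nat) (seq 0 b).
Proof.
  induction b; simpl; intros a f. auto.
  rewrite Nat.add_0_r. f_equal. rewrite IHb. rewrite (IHb 1%nat).
  apply flat_map_ext. intros r. f_equal. lia.
Qed.

Lemma arranged_blocks : forall B b ps,
  arranged (B * b) ps =
  flat_map (fun be => flat_map (fun r => opt (cell_content ps (be * b + r))) (seq 0 b)) (seq 0 B).
Proof.
  induction B; intros b ps. reflexivity.
  rewrite arranged_eq. replace (S B * b)%nat with (B * b + b)%nat by lia.
  rewrite seq_app, flat_map_app, <- arranged_eq, IHB, seq_S, flat_map_app.
  f_equal. simpl. rewrite app_nil_r. rewrite flat_map_seq_shift. reflexivity.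
Qed.

Lemma arranged_extend : forall M m ps, (M <= m)%nat -> (forall p, In p ps -> (fst p < M)%nat) ->
  arranged m ps = arranged M ps.
Proof.
  intros M m ps HM H. rewrite !arranged_eq. replace m with (M + (m - M))%nat by lia.
  rewrite seq_app, flat_map_app.
  rewrite <- (app_nil_r (flat_map _ (seq 0 M))) at 2. f_equal.
  rewrite flat_map_seq_shift. simpl.
  induction (m - M)%nat. reflexivity. rewrite seq_S, flat_map_app, IHn. simpl.
  rewrite cc_none. reflexivity. intros p Hp. specialize (H p Hp). lia.
Qed.

Lemma positions_snoc : forall A l h x, positions A h (l ++ [x]) = positions A h l ++ [A (h ++ l) x].
Proof.
  induction l; simpl; intros h x. rewrite app_nil_r. auto.
  rewrite IHl. rewrite <- app_assoc. reflexivity.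
Qed.

Lemma positions_length : forall A s h, length (positions A h s) = length s.
Proof. induction s; simpl; intros; auto. Qed.

Lemma positions_Forall : forall (P : nat -> Prop) A s h,
  (forall s1 x s2, s = s1 ++ x :: s2 -> P (A (h ++ s1) x)) -> Forall P (positions A h s).
Proof.
  induction s; simpl; intros h H. constructor.
  constructor.
  - specialize (H [] a s eq_refl). rewrite app_nil_r in H. auto.
  - apply IHs. intros s1 x s2 E. rewrite <- app_assoc. apply (H (a :: s1) x s2). rewrite E. auto.
Qed.

Definition upd (f : nat -> nat) (i v : nat) : nat -> nat :=
  fun j => if Nat.eqb j i then v else f j.

Lemma upd_same : forall f i v, upd f i v i = v.
Proof. intros. unfold upd. rewrite Nat.eqb_refl. auto. Qed.
Lemma upd_other : forall f i v j, j <> i -> upd f i v j = f j.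
Proof. intros. unfold upd. destruct (Nat.eqb_spec j i); [lia|auto]. Qed.

Fixpoint sumn (f : nat -> nat) (k : nat) : nat :=
  match k with O => O | S k' => (sumn f k' + f k')%nat end.

Lemma sumn_upd : forall f i v k, (i < k)%nat -> (sumn (upd f i v) k + f i = sumn f k + v)%nat.
Proof.
  induction k; simpl; intros H. lia.
  destruct (Nat.eq_dec i k).
  - subst. rewrite upd_same.
    assert (sumn (upd f k v) k = sumn f k).
    { clear. assert (forall m, (m <= k)%nat -> sumn (upd f k v) m = sumn f m).
      { induction m; simpl; intros; auto. rewrite IHm by lia. rewrite upd_other by lia. auto. }
      apply H; lia. }
    lia.
  - rewrite upd_other by lia. specialize (IHk ltac:(lia)). lia.
Qed.

Lemma sumn_le : forall f g k, (forall j, (j < k)%nat -> (f j <= g j)%nat) -> (sumn f k <= sumn g k)%nat.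
Proof. induction k; simpl; intros H. lia. assert (H1 := H k ltac:(lia)). assert (H2 : (sumn f k <= sumn g k)%nat) by (apply IHk; intros; apply H; lia). lia. Qed.

Lemma sumn_mul : forall c f k, (sumn (fun j => c * f j) k = c * sumn f k)%nat.
Proof. induction k; simpl. lia. rewrite IHk. lia. Qed.

Lemma sumn_plus_const : forall f c k, (sumn (fun j => f j + c) k = sumn f k + c * k)%nat.
Proof. induction k; simpl. lia. rewrite IHk. lia. Qed.

Record st := mkst { nb : nat; cur : nat -> nat; cb : nat -> nat; ob : nat -> nat; mm : nat -> nat; own : nat -> nat }.

Definition st0 : st := mkst 0 (fun _ => 0%nat) (fun _ => 0%nat) (fun _ => 0%nat) (fun _ => 0%nat) (fun _ => 0%nat).

Section Routing.
Variable k c : nat.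
Variable idx : R -> nat.

Definition step (s : st) (x : R) : nat * st :=
  let j := idx x in
  if andb (Nat.ltb 0 (ob s j)) (Nat.ltb (cb s (cur s j)) c) then
    let be := cur s j in
    (be, mkst (nb s) (cur s) (upd (cb s) be (S (cb s be))) (ob s) (upd (mm s) j (S (mm s j))) (own s))
  else
    let be := nb s in
    (be, mkst (S (nb s)) (upd (cur s) j be) (upd (cb s) be (S (cb s be))) (upd (ob s) j (S (ob s j)))
              (upd (mm s) j (S (mm s j))) (upd (own s) be j)).

Definition state (h : list R) : st := fold_left (fun s x => snd (step s x)) h st0.
Definition route (h : list R) (x : R) : nat := fst (step (state h) x).

Lemma state_snoc : forall h x, state (h ++ [x]) = snd (step (state h) x).
Proof. intros. unfold state. rewrite fold_left_app. reflexivity. Qed.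

Definition Inv (s : st) (n : nat) : Prop :=
  nb s = sumn (ob s) k /\
  (forall j, (k <= j)%nat -> ob s j = 0%nat) /\
  (forall j, (0 < ob s j)%nat ->
     (c * (ob s j - 1) + cb s (cur s j) <= mm s j)%nat /\ (cur s j < nb s)%nat /\ own s (cur s j) = j) /\
  (forall be, (nb s <= be)%nat -> cb s be = 0%nat) /\
  (forall be, (cb s be <= c)%nat) /\
  sumn (mm s) k = n.

Hypothesis Hc : (1 <= c)%nat.
Hypothesis Hidx : forall x, (idx x < k)%nat.

Lemma Inv_step : forall s n x, Inv s n -> Inv (snd (step s x)) (S n).
Proof.
  intros s n x (Ha & Hb & Hcc & Hd & He & Hf).
  pose proof (Hidx x) as Hj. set (j := idx x) in *.
  unfold step. fold j.
  destruct (andb (Nat.ltb 0 (ob s j)) (Nat.ltb (cb s (cur s j)) c)) eqn:E.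
  - apply andb_true_iff in E. destruct E as [E1 E2].
    apply Nat.ltb_lt in E1. apply Nat.ltb_lt in E2.
    destruct (Hcc j E1) as (Hc1 & Hc2 & Hc3).
    unfold Inv; simpl. refine (conj _ (conj _ (conj _ (conj _ (conj _ _))))).
    + auto.
    + auto.
    + intros j' Hj'. destruct (Nat.eq_dec j' j).
      * subst j'. rewrite !upd_same. split; [lia|split; auto].
      * destruct (Hcc j' Hj') as (H1 & H2 & H3).
        assert (cur s j' <> cur s j). { intro Heq. rewrite Heq in H3. congruence. }
        rewrite upd_other by auto. rewrite upd_other by auto. split; [lia|split; auto].
    + intros be Hbe. rewrite upd_other by lia. auto.
    + intros be. destruct (Nat.eq_dec be (cur s j)).
      * subst. rewrite upd_same. lia.
      * rewrite upd_other by auto. auto.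
    + pose proof (sumn_upd (mm s) j (S (mm s j)) k Hj). lia.
  - assert (Hfull : (0 < ob s j)%nat -> (c * ob s j <= mm s j)%nat).
    { intros Hpos. destruct (Hcc j Hpos) as (H1 & _).
      apply andb_false_iff in E. destruct E as [E|E]; apply Nat.ltb_ge in E. lia.
      destruct (ob s j) eqn:Eo. lia. simpl in H1. nia. }
    unfold Inv; simpl. refine (conj _ (conj _ (conj _ (conj _ (conj _ _))))).
    + pose proof (sumn_upd (ob s) j (S (ob s j)) k Hj). lia.
    + intros j' Hj'. rewrite upd_other by lia. auto.
    + intros j' Hj'. destruct (Nat.eq_dec j' j).
      * subst j'. rewrite !upd_same. rewrite Hd by lia.
        split; [|split; [lia|auto]].
        destruct (ob s j) eqn:Eo. simpl. lia. specialize (Hfull ltac:(lia)). nia.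
      * rewrite upd_other in Hj' by auto. destruct (Hcc j' Hj') as (H1 & H2 & H3).
        rewrite (upd_other (cur s) j) by auto. rewrite !upd_other by (auto || lia). split; [lia|split; [lia|auto]].
    + intros be Hbe. rewrite upd_other by lia. apply Hd. lia.
    + intros be. destruct (Nat.eq_dec be (nb s)).
      * subst. rewrite upd_same. rewrite Hd by lia. lia.
      * rewrite upd_other by auto. auto.
    + pose proof (sumn_upd (mm s) j (S (mm s j)) k Hj). lia.
Qed.

Lemma Inv_state : forall h, Inv (state h) (length h).
Proof.
  induction h as [|x h IH] using rev_ind.
  - unfold Inv; simpl. repeat split; intros; try lia.
    clear. induction k; simpl; lia.
    clear. induction k; simpl; lia.
  - rewrite state_snoc, length_app. simpl. rewrite Nat.add_1_r. apply Inv_step. auto.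
Qed.

Lemma Inv_nb : forall s n, Inv s n -> (c * nb s <= n + c * k)%nat.
Proof.
  intros s n (Ha & Hb & Hcc & Hd & He & Hf). rewrite Ha.
  rewrite <- sumn_mul. rewrite <- Hf. rewrite <- sumn_plus_const.
  apply sumn_le. intros j Hj. destruct (ob s j) eqn:Eo. lia.
  destruct (Hcc j ltac:(lia)) as (H1 & _). rewrite Eo in H1. simpl in H1. nia.
Qed.

Lemma route_lt : forall h x, (route h x < nb (state (h ++ [x])))%nat.
Proof.
  intros. rewrite state_snoc. unfold route, step.
  destruct (Inv_state h) as (Ha & Hb & Hcc & Hd & He & Hf).
  destruct (andb _ _) eqn:E; simpl.
  - apply andb_true_iff in E. destruct E as [E1 _]. apply Nat.ltb_lt in E1.
    apply Hcc; auto.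
  - lia.
Qed.

Lemma route_own : forall h x, own (state (h ++ [x])) (route h x) = idx x.
Proof.
  intros. rewrite state_snoc. unfold route, step.
  destruct (Inv_state h) as (Ha & Hb & Hcc & Hd & He & Hf).
  destruct (andb _ _) eqn:E; simpl.
  - apply andb_true_iff in E. destruct E as [E1 _]. apply Nat.ltb_lt in E1.
    apply Hcc; auto.
  - apply upd_same.
Qed.

Lemma step_stable : forall s x be, (be < nb s)%nat ->
  (nb s <= nb (snd (step s x)))%nat /\ own (snd (step s x)) be = own s be.
Proof.
  intros. unfold step. destruct (andb _ _); simpl. lia. split. lia. apply upd_other. lia.
Qed.

Lemma own_stable : forall t h be, (be < nb (state h))%nat ->
  (nb (state h) <= nb (state (h ++ t)))%nat /\ own (state (h ++ t)) be = own (state h) be.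
Proof.
  induction t; intros h be H. rewrite app_nil_r. lia.
  replace (h ++ a :: t) with ((h ++ [a]) ++ t) by (rewrite <- app_assoc; auto).
  destruct (step_stable (state h) a be H) as [S1 S2].
  rewrite <- state_snoc in S1, S2.
  destruct (IHt (h ++ [a]) be ltac:(lia)) as [T1 T2]. split. lia. congruence.
Qed.

Fixpoint selg (f : list R -> R -> bool) (p : list R) (s : list R) : list R :=
  match s with
  | [] => []
  | x :: t => if f p x then x :: selg f (p ++ [x]) t else selg f (p ++ [x]) t
  end.

Lemma selg_app : forall f l1 l2 p, selg f p (l1 ++ l2) = selg f p l1 ++ selg f (p ++ l1) l2.
Proof.
  induction l1; intros; simpl. rewrite app_nil_r. auto.
  rewrite IHl1. rewrite <- app_assoc. destruct (f p a); auto.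
Qed.

Lemma selg_incl : forall f s p y, In y (selg f p s) -> In y s.
Proof.
  induction s; simpl; intros p y H. auto.
  destruct (f p a); simpl in H. destruct H; auto. right; eapply IHs; eauto.
  right; eapply IHs; eauto.
Qed.

Definition selp (be : nat) : list R -> R -> bool := fun p y => Nat.eqb (route p y) be.
Definition sel (be : nat) (h : list R) : list R := selg (selp be) [] h.

Lemma sel_snoc : forall be h x, sel be (h ++ [x]) = sel be h ++ (if Nat.eqb (route h x) be then [x] else []).
Proof. intros. unfold sel. rewrite selg_app. simpl. unfold selp. destruct (Nat.eqb _ _); auto. Qed.

Lemma sel_length : forall be h, length (sel be h) = cb (state h) be.
Proof.
  intros be h. induction h as [|x h IH] using rev_ind. reflexivity.
  rewrite sel_snoc, length_app, IH, state_snoc.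
  unfold route. destruct (step (state h) x) as [r s'] eqn:E. simpl.
  assert (cb s' = upd (cb (state h)) r (S (cb (state h) r))).
  { unfold step in E. destruct (andb _ _); inversion E; subst; auto. }
  rewrite H. destruct (Nat.eqb_spec r be).
  - subst. rewrite upd_same. simpl. lia.
  - rewrite upd_other by auto. simpl. lia.
Qed.

Lemma sel_le_c : forall be h, (length (sel be h) <= c)%nat.
Proof. intros. rewrite sel_length. destruct (Inv_state h) as (_ & _ & _ & _ & He & _). auto. Qed.

End Routing.

Definition Spec (A : online_alg) (n m : nat) (F : R) : Prop :=
  forall s, (length s <= n)%nat -> Forall in01 s ->
    NoDup (positions A nil s) /\ Forall (fun j => (j < m)%nat) (positions A nil s) /\
    tv (arranged m (combine (positions A nil s) s)) <= F.

Lemma map_fst_combine {A B : Type} : forall (l : list A) (s : list B),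
  length l = length s -> map fst (combine l s) = l.
Proof. induction l; destruct s; simpl; intros H; try discriminate; auto. f_equal. auto. Qed.

Lemma filter_map_fst {A B : Type} : forall (Q : A -> bool) (ps : list (A * B)),
  filter Q (map fst ps) = map fst (filter (fun p => Q (fst p)) ps).
Proof. induction ps; simpl; auto. destruct (Q (fst a)); simpl; f_equal; auto. Qed.

Lemma NoDup_blocks : forall b (L : list nat),
  (forall be, NoDup (filter (fun p => Nat.eqb (p / b) be) L)) -> NoDup L.
Proof.
  induction L; intros H. constructor.
  constructor.
  - intro Ha. specialize (H (a / b)%nat). simpl in H. rewrite Nat.eqb_refl in H.
    inversion H; subst. apply H2. apply filter_In. split; auto. apply Nat.eqb_refl.
  - apply IHL. intros be. specialize (H be). simpl in H. destruct (Nat.eqb (a / b) be); auto.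
    inversion H; auto.
Qed.

Lemma NoDup_map_add : forall a (L : list nat), NoDup L -> NoDup (map (fun o => a + o)%nat L).
Proof.
  induction L; simpl; intros H; constructor; inversion H; subst; auto.
  intro Hin. apply in_map_iff in Hin. destruct Hin as [o [Ho Hin]]. assert (o = a0) by lia. subst. auto.
Qed.

Lemma map_flat_map {A B C : Type} : forall (g : B -> C) (f : A -> list B) l,
  map g (flat_map f l) = flat_map (fun x => map g (f x)) l.
Proof. induction l; simpl; auto. rewrite map_app. f_equal; auto. Qed.

Lemma flat_map_ext_in {A B : Type} : forall (f g : A -> list B) l,
  (forall a, In a l -> f a = g a) -> flat_map f l = flat_map g l.
Proof. induction l; simpl; intros H; auto. rewrite H by auto. f_equal. auto. Qed.

Lemma div_block : forall be b r, (r < b)%nat -> ((be * b + r) / b = be)%nat.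
Proof.
  intros. rewrite Nat.div_add_l by lia. rewrite Nat.div_small by auto. lia.
Qed.

Section Comp.
Variable k c b : nat.
Variable idx : R -> nat.
Variable A' : online_alg.

Definition tr (x : R) : R := INR k * x - INR (idx x).

Definition compalg : online_alg := fun h x =>
  (route c idx h x * b + A' (map tr (sel c idx (route c idx h x) h)) (tr x))%nat.

Lemma sub_run : forall s h be,
  (forall s1 x s2, s = s1 ++ x :: s2 ->
     (A' (map tr (sel c idx (route c idx (h ++ s1) x) (h ++ s1))) (tr x) < b)%nat) ->
  map (fun p => (fst p, tr (snd p))) (filter (fun p => Nat.eqb (fst p / b) be) (combine (positions compalg h s) s))
  = map (fun p => (be * b + fst p, snd p)%nat)
      (combine (positions A' (map tr (sel c idx be h)) (map tr (selg (selp c idx be) h s)))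
               (map tr (selg (selp c idx be) h s))).
Proof.
  induction s as [|x t IH]; intros h be Hoff. reflexivity.
  assert (Hx := Hoff [] x t eq_refl). rewrite app_nil_r in Hx.
  assert (Hoff' : forall s1 x' s2, t = s1 ++ x' :: s2 ->
     (A' (map tr (sel c idx (route c idx ((h ++ [x]) ++ s1) x') ((h ++ [x]) ++ s1))) (tr x') < b)%nat).
  { intros s1 x' s2 E. rewrite <- app_assoc. apply (Hoff (x :: s1) x' s2). rewrite E. auto. }
  cbn [positions combine filter selg fst].
  assert (Hdiv : (compalg h x / b = route c idx h x)%nat). { unfold compalg. apply div_block. auto. }
  rewrite Hdiv.
  destruct (Nat.eqb_spec (route c idx h x) be) as [E|E].
  - assert (Hs : selp c idx be h x = true) by (unfold selp; rewrite E; apply Nat.eqb_refl).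
    rewrite Hs. cbn [map fst snd]. rewrite (IH (h ++ [x]) be Hoff').
    rewrite sel_snoc. rewrite E, Nat.eqb_refl. rewrite map_app. simpl.
    f_equal. f_equal. unfold compalg. rewrite E. auto.
  - assert (Hs : selp c idx be h x = false) by (unfold selp; apply Nat.eqb_neq; auto).
    rewrite Hs. rewrite (IH (h ++ [x]) be Hoff'). rewrite sel_snoc.
    destruct (Nat.eqb_spec (route c idx h x) be). congruence. rewrite app_nil_r. auto.
Qed.

Lemma own_run : forall t h,
  (1 <= c)%nat -> (forall x, (idx x < k)%nat) ->
  (forall s1 x s2, t = s1 ++ x :: s2 ->
     (A' (map tr (sel c idx (route c idx (h ++ s1) x) (h ++ s1))) (tr x) < b)%nat) ->
  forall p y, In (p, y) (combine (positions compalg h t) t) -> idx y = own (state c idx (h ++ t)) (p / b).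
Proof.
  induction t as [|x t IH]; intros h Hc Hidx Hoff p y Hin. destruct Hin.
  simpl in Hin. destruct Hin as [Hin|Hin].
  - injection Hin as Hp Hy. subst p y. assert (Hx := Hoff [] x t eq_refl). rewrite app_nil_r in Hx.
    assert (Hdiv : (compalg h x / b = route c idx h x)%nat). { unfold compalg. apply div_block. auto. }
    rewrite Hdiv. replace (h ++ x :: t) with ((h ++ [x]) ++ t) by (rewrite <- app_assoc; auto).
    destruct (own_stable c idx Hc t (h ++ [x]) (route c idx h x) (route_lt k c idx Hc Hidx h x)) as [_ E].
    rewrite E. rewrite (route_own k c idx Hc Hidx). auto.
  - replace (h ++ x :: t) with ((h ++ [x]) ++ t) by (rewrite <- app_assoc; auto).
    apply IH; auto.
    intros s1 x' s2 E. rewrite <- app_assoc. apply (Hoff (x :: s1) x' s2). rewrite E. auto.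
Qed.

Theorem comp_spec : forall n B F',
  Spec A' c b F' -> (1 <= c)%nat -> (1 <= k)%nat -> (forall x, (idx x < k)%nat) ->
  (forall x, in01 x -> in01 (tr x)) -> (n + c * k <= c * B)%nat ->
  Spec compalg n (B * b) (INR B * (F' / INR k + 1)).
Proof.
  intros n B F' HA Hc Hk Hidx Htr HB s Hlen Hin.
  assert (Hsub : forall be, (length (map tr (sel c idx be s)) <= c)%nat /\ Forall in01 (map tr (sel c idx be s))).
  { intros be. split. rewrite length_map. apply (sel_le_c k c idx Hc Hidx).
    apply Forall_forall. intros z Hz. apply in_map_iff in Hz. destruct Hz as [y [Hy Hy2]]. rewrite <- Hy.
    apply Htr. apply selg_incl in Hy2. rewrite Forall_forall in Hin. auto. }
  assert (Hoff : forall s1 x s2, s = s1 ++ x :: s2 ->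
     (A' (map tr (sel c idx (route c idx ([] ++ s1) x) ([] ++ s1))) (tr x) < b)%nat).
  { intros s1 x s2 E. simpl. set (be := route c idx s1 x).
    assert (Hu1 : (length (map tr (sel c idx be (s1 ++ [x]))) <= c)%nat).
    { rewrite length_map. apply (sel_le_c k c idx Hc Hidx). }
    assert (Hu2 : Forall in01 (map tr (sel c idx be (s1 ++ [x])))).
    { apply Forall_forall. intros z Hz. apply in_map_iff in Hz. destruct Hz as [y [Hy Hy2]]. rewrite <- Hy.
      apply Htr. apply selg_incl in Hy2. rewrite Forall_forall in Hin. apply Hin. rewrite E.
      apply in_app_or in Hy2. apply in_or_app. destruct Hy2 as [H|H]; auto. right. destruct H; [left|]; auto. destruct H. }
    destruct (HA _ Hu1 Hu2) as [_ [Hf _]].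
    rewrite sel_snoc in Hf. unfold be in Hf at 2. rewrite Nat.eqb_refl in Hf.
    rewrite map_app in Hf. simpl in Hf. rewrite positions_snoc in Hf.
    apply Forall_app in Hf. destruct Hf as [_ Hf]. inversion Hf; subst. simpl in H1. auto. }
  assert (Hroute : forall s1 x s2, s = s1 ++ x :: s2 -> (route c idx s1 x < B)%nat).
  { intros s1 x s2 E. pose proof (route_lt k c idx Hc Hidx s1 x).
    pose proof (Inv_nb k c Hc _ _ (Inv_state k c idx Hc Hidx (s1 ++ [x]))).
    assert (length (s1 ++ [x]) <= length s)%nat.
    { rewrite E, !length_app. simpl. lia. }
    nia. }
  set (comp_ps := combine (positions compalg [] s) s).
  set (S := fun be => map tr (sel c idx be s)).
  set (sub_ps := fun be => combine (positions A' [] (S be)) (S be)).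
  assert (EQ : forall be, map (fun p => (fst p, tr (snd p))) (filter (fun p => Nat.eqb (fst p / b) be) comp_ps)
                = map (fun p => (be * b + fst p, snd p)%nat) (sub_ps be)).
  { intros be. apply (sub_run s [] be Hoff). }
  split; [|split].
  -
    apply (NoDup_blocks b). intros be.
    assert (positions compalg [] s = map fst comp_ps).
    { unfold comp_ps. rewrite map_fst_combine; auto. apply positions_length. }
    rewrite H, filter_map_fst.
    replace (map fst (filter (fun p => Nat.eqb (fst p / b) be) comp_ps))
      with (map fst (map (fun p => (fst p, tr (snd p))) (filter (fun p => Nat.eqb (fst p / b) be) comp_ps)))
      by (rewrite map_map; auto).
    rewrite EQ, map_map. simpl.
    replace (map (fun x => (be * b + fst x)%nat) (sub_ps be)) with (map (fun o => (be * b + o)%nat) (map fst (sub_ps be)))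
      by (rewrite map_map; auto).
    unfold sub_ps. rewrite map_fst_combine by apply positions_length.
    apply NoDup_map_add. destruct (Hsub be). apply (HA _ H0 H1).
  - apply positions_Forall. intros s1 x s2 E. simpl.
    specialize (Hoff s1 x s2 E). specialize (Hroute s1 x s2 E). simpl in Hoff. unfold compalg. nia.
  - assert (Hown := own_run s [] Hc Hidx Hoff). simpl in Hown.
    fold comp_ps in Hown.
    rewrite arranged_blocks.
    replace (INR B) with (INR (length (seq 0 B))) by (rewrite length_seq; auto).
    apply tv_flat_map. intros be Hbe. split.
    + apply Forall_forall. intros y Hy. apply in_flat_map in Hy. destruct Hy as [r [_ Hr]].
      destruct (cell_content comp_ps (be * b + r)) eqn:Ec; simpl in Hr; [|destruct Hr].
      destruct Hr as [Hr|Hr]; [subst|destruct Hr].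
      apply cc_In in Ec. apply in_combine_r in Ec. rewrite Forall_forall in Hin. auto.
    + set (l := flat_map (fun r => opt (cell_content comp_ps (be * b + r))) (seq 0 b)).
      assert (Hmap : map tr l = arranged b (sub_ps be)).
      { unfold l. rewrite map_flat_map, arranged_eq. apply flat_map_ext_in. intros r Hr.
        apply in_seq in Hr.
        assert (option_map tr (cell_content comp_ps (be * b + r)) = cell_content (sub_ps be) r).
        { rewrite <- (cc_filter (fun p => Nat.eqb (fst p / b) be)).
          rewrite <- cc_map_snd. rewrite EQ. apply cc_map_shift.
          intros p _ Hp. rewrite Hp, div_block by lia. apply Nat.eqb_refl. }
        rewrite <- H. destruct (cell_content comp_ps (be * b + r)); auto. }
      assert (Htv : tv (map tr l) = INR k * tv l).
      { apply (tv_map_affine tr (INR k) (INR (own (state c idx s) be))). apply pos_INR.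
        intros y Hy. unfold l in Hy. apply in_flat_map in Hy. destruct Hy as [r [Hr Hy]].
        apply in_seq in Hr.
        destruct (cell_content comp_ps (be * b + r)) eqn:Ec; simpl in Hy; [|destruct Hy].
        destruct Hy as [Hy|Hy]; [subst|destruct Hy].
        apply cc_In in Ec. apply Hown in Ec. rewrite div_block in Ec by lia.
        unfold tr. rewrite Ec. auto. }
      destruct (Hsub be) as [H1 H2]. destruct (HA _ H1 H2) as [_ [_ H3]].
      fold (S be) in H3. fold (sub_ps be) in H3. rewrite <- Hmap, Htv in H3.
      assert (0 < INR k) by (apply lt_0_INR; lia).
      apply (Rmult_le_reg_l (INR k)); auto. field_simplify; lra.
Qed.

End Comp.

Definition idxk (k : nat) (x : R) : nat := Nat.min (Z.to_nat (Int_part (INR k * x))) (k - 1).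

Lemma idxk_lt : forall k x, (1 <= k)%nat -> (idxk k x < k)%nat.
Proof. intros. unfold idxk. lia. Qed.

Lemma idxk_tr : forall k x, (1 <= k)%nat -> in01 x -> in01 (tr k (idxk k) x).
Proof.
  intros k x Hk Hx. unfold in01 in *. unfold tr, idxk.
  set (z := Int_part (INR k * x)).
  destruct (base_Int_part (INR k * x)) as [H1 H2]. fold z in H1, H2.
  assert (Hkx : 0 <= INR k * x <= INR k).
  { assert (0 <= INR k) by apply pos_INR. split; nra. }
  assert (Hz0 : (0 <= z)%Z). { assert (IZR z > -1) by lra.
    assert (-1 < z)%Z by (apply lt_IZR; lra). lia. }
  assert (HINR : INR (Z.to_nat z) = IZR z). { rewrite INR_IZR_INZ, Z2Nat.id; auto. }
  destruct (Nat.le_gt_cases (Z.to_nat z) (k - 1)) as [Hle|Hgt].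
  - rewrite Nat.min_l by auto. rewrite HINR. lra.
  - rewrite Nat.min_r by lia. rewrite minus_INR by lia. simpl.
    assert (INR k <= IZR z). { rewrite <- HINR. apply le_INR. lia. }
    assert (INR k * x = INR k) by lra. lra.
Qed.

Definition A0 : online_alg := fun _ _ => 0%nat.

Lemma A0_spec : Spec A0 1 1 0.
Proof.
  intros s Hlen Hin. destruct s as [|x [|y t]]; simpl in Hlen; try lia.
  - simpl. split. constructor. split. constructor. unfold arranged. simpl. lra.
  - simpl. unfold A0. split. constructor. intros []. constructor. split. constructor. lia. constructor.
    unfold arranged. simpl. lra.
Qed.

Fixpoint Fcost (B k : nat) (t : nat) : R :=
  match t with O => 0 | S t' => INR B * (Fcost B k t' / INR k + 1) end.

Fixpoint lev (B k : nat) (t : nat) : online_alg :=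
  match t with
  | O => A0
  | S t' => compalg k ((B - k) ^ t') (B ^ t') (idxk k) (lev B k t')
  end.

Lemma lev_spec : forall B k t, (1 <= k)%nat -> (k < B)%nat ->
  Spec (lev B k t) ((B - k) ^ t) (B ^ t) (Fcost B k t).
Proof.
  induction t; intros Hk HB. simpl. apply A0_spec.
  simpl. replace (B ^ t * B)%nat with (B * B ^ t)%nat by lia.
  apply comp_spec; auto.
  - assert ((B - k) ^ t <> 0)%nat by (apply Nat.pow_nonzero; lia). lia.
  - intros; apply idxk_lt; auto.
  - intros; apply idxk_tr; auto.
  - replace ((B - k) ^ t * (B - k))%nat with ((B - k) ^ t * (B - k))%nat by lia.
    assert (((B - k) ^ t * (B - k) + (B - k) ^ t * k = (B - k) ^ t * B)%nat).
    { rewrite <- Nat.mul_add_distr_l. f_equal. lia. }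
    rewrite Nat.mul_comm. lia.
Qed.

Lemma Fcost_bound : forall B k t, (1 <= k)%nat -> (k <= B)%nat ->
  Fcost B k t <= INR t * INR B * (INR B / INR k) ^ t.
Proof.
  intros B k t Hk HB. assert (Hk' : 0 < INR k) by (apply lt_0_INR; lia).
  assert (Hr : 1 <= INR B / INR k).
  { apply (Rmult_le_reg_r (INR k)); auto. replace (INR B / INR k * INR k) with (INR B) by (field; lra).
    rewrite Rmult_1_l. apply le_INR; auto. }
  assert (HB0 : 0 <= INR B) by apply pos_INR.
  induction t. simpl. lra.
  simpl Fcost. rewrite S_INR. simpl pow.
  assert (1 <= (INR B / INR k) ^ t) by (apply pow_R1_Rle; auto).
  replace (INR B * (Fcost B k t / INR k + 1)) with (INR B / INR k * Fcost B k t + INR B) by (field; lra).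
  assert (INR B / INR k * Fcost B k t <= INR B / INR k * (INR t * INR B * (INR B / INR k) ^ t)).
  { apply Rmult_le_compat_l; lra. }
  assert (INR B <= INR B * (INR B / INR k * (INR B / INR k) ^ t)).
  { rewrite <- Rmult_1_r at 1. apply Rmult_le_compat_l; auto.
    replace 1 with (1 * 1) by ring. apply Rmult_le_compat; lra. }
  nra.
Qed.

Lemma final_reduce : forall A n M m F, Spec A n M F -> (M <= m)%nat ->
  forall s, length s = n -> Forall in01 s ->
  valid_run A m s /\ run_cost A m s <= F + 2.
Proof.
  intros A n M m F HA HM s Hlen Hin.
  destruct (HA s ltac:(lia) Hin) as (H1 & H2 & H3).
  split. split; auto. eapply Forall_impl; [|exact H2]. simpl; intros; lia.
  unfold run_cost. rewrite (arranged_extend M m); auto.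
  - assert (Forall in01 (arranged M (combine (positions A [] s) s))).
    { apply Forall_forall. intros y Hy. unfold arranged in Hy. apply in_flat_map in Hy.
      destruct Hy as [j [_ Hy]]. destruct (cell_content _ j) eqn:E; simpl in Hy; [|destruct Hy].
      destruct Hy as [Hy|[]]. subst. apply cc_In in E. apply in_combine_r in E.
      rewrite Forall_forall in Hin. auto. }
    pose proof (cost_from_0_le _ H). lra.
  - intros [p y] Hp. apply in_combine_l in Hp. rewrite Forall_forall in H2. simpl. auto.
Qed.

Lemma assemble : forall B k d Btop n m,
  (1 <= k)%nat -> (k < B)%nat ->
  (n + (B - k) ^ d <= (B - k) ^ d * Btop)%nat ->
  (Btop * B ^ d <= m)%nat ->
  exists A : online_alg, forall s, length s = n -> Forall in01 s ->
    valid_run A m s /\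
    run_cost A m s <= INR Btop * (INR d * INR B * (INR B / INR k) ^ d + 1) + 2.
Proof.
  intros B k d Btop n m Hk HB H1 H2.
  exists (compalg 1 ((B - k) ^ d) (B ^ d) (idxk 1) (lev B k d)).
  intros s Hlen Hin.
  assert (HS : Spec (compalg 1 ((B - k) ^ d) (B ^ d) (idxk 1) (lev B k d)) n (Btop * B ^ d)
                (INR Btop * (Fcost B k d / INR 1 + 1))).
  { apply comp_spec; auto.
    - apply lev_spec; auto.
    - assert ((B - k) ^ d <> 0)%nat by (apply Nat.pow_nonzero; lia). lia.
    - intros; apply idxk_lt; auto.
    - intros; apply idxk_tr; auto.
    - lia. }
  destruct (final_reduce _ _ _ _ _ HS H2 s Hlen Hin) as [V C].
  split; auto.
  pose proof (Fcost_bound B k d Hk ltac:(lia)).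
  assert (0 <= INR Btop) by apply pos_INR.
  simpl INR in C. replace (Fcost B k d / 1) with (Fcost B k d) in C by field.
  assert (INR Btop * (Fcost B k d + 1) <= INR Btop * (INR d * INR B * (INR B / INR k) ^ d + 1)).
  { apply Rmult_le_compat_l; lra. }
  lra.
Qed.

Lemma ln_le_inv : forall a b, 0 < a -> 0 < b -> ln a <= ln b -> a <= b.
Proof.
  intros a b Ha Hb H. destruct (Rle_or_lt a b); auto.
  pose proof (ln_increasing b a Hb H0). lra.
Qed.

Lemma ln_mono : forall a b, 0 < a -> a <= b -> ln a <= ln b.
Proof.
  intros a b Ha H. destruct (Req_dec a b). subst; lra.
  left. apply ln_increasing; lra.
Qed.

Lemma ln_le_sub1 : forall x, 0 < x -> ln x <= x - 1.
Proof. intros. pose proof (exp_ineq1_le (ln x)). rewrite exp_ln in H0; lra. Qed.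

Lemma exp_ge_id : forall x, x <= exp x.
Proof. intros. pose proof (exp_ineq1_le x). lra. Qed.

Lemma exp_mono : forall x y, x <= y -> exp x <= exp y.
Proof. intros. destruct (Req_dec x y). subst; lra. left; apply exp_increasing; lra. Qed.

Lemma bernoulli : forall a d, 0 <= a <= 1 -> 1 - INR d * a <= (1 - a) ^ d.
Proof.
  induction d; intros H. simpl. lra.
  rewrite S_INR. simpl pow. specialize (IHd H).
  assert (0 <= INR d) by apply pos_INR.
  assert (0 <= (1 - a) ^ d) by (apply pow_le; lra).
  nra.
Qed.

Lemma ceil_nat : forall r, 0 <= r -> r < INR (Z.to_nat (up r)) <= r + 1.
Proof.
  intros r Hr. destruct (archimed r) as [H1 H2].
  assert (0 <= up r)%Z. { assert (-1 < up r)%Z by (apply lt_IZR; lra). lia. }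
  rewrite INR_IZR_INZ, Z2Nat.id by auto. lra.
Qed.

Lemma floor_nat : forall r, 0 <= r -> INR (Z.to_nat (Int_part r)) <= r /\ r - 1 < INR (Z.to_nat (Int_part r)).
Proof.
  intros r Hr. destruct (base_Int_part r) as [H1 H2].
  assert (0 <= Int_part r)%Z. { assert (-1 < Int_part r)%Z by (apply lt_IZR; lra). lia. }
  rewrite INR_IZR_INZ, Z2Nat.id by auto. lra.
Qed.

Lemma find_k : forall (f : nat -> nat) X N, (1 <= N)%nat -> (f 1 <= X)%nat -> (X < f N)%nat ->
  exists k, (1 <= k)%nat /\ (f k <= X)%nat /\ (X < f (S k))%nat.
Proof.
  intros f X N. induction N; intros HN H1 H2. lia.
  destruct (Nat.le_gt_cases 1 N).
  - destruct (Nat.le_gt_cases (f N) X).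
    + exists N. auto.
    + apply IHN; auto.
  - assert (N = 0%nat) by lia. subst. lia.
Qed.

Lemma sq_eq : forall a b, 0 <= a -> 0 <= b -> a * a = b * b -> a = b.
Proof. intros. nra. Qed.

Lemma pow2_le_exp : forall d, 2 ^ d <= exp (INR d).
Proof.
  induction d. simpl. rewrite exp_0. lra.
  rewrite S_INR, exp_plus. simpl pow.
  assert (2 <= exp 1). { pose proof (exp_ineq1 1 ltac:(lra)). lra. }
  assert (0 <= 2 ^ d) by (apply pow_le; lra).
  nra.
Qed.

Lemma ln_pow_nat : forall a d, 0 < a -> ln (a ^ d) = INR d * ln a.
Proof. intros. apply ln_pow; auto. Qed.

Lemma sq_le : forall a b, 0 <= a -> 0 <= b -> a * a <= b * b -> a <= b.
Proof. intros. nra. Qed.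

Lemma one_le_mul : forall a b, 1 <= a -> 1 <= b -> 1 <= a * b.
Proof. intros. nra. Qed.

Theorem theorem4 :
  forall eps : R, 0 < eps ->
  exists (C : R) (N0 : nat),
    forall n : nat, (N0 <= n)%nat ->
    exists A : online_alg,
      forall s : list R,
        length s = n ->
        Forall (fun x => 0 <= x <= 1) s ->
        valid_run A (num_cells (1 + eps) n) s /\
        run_cost A (num_cells (1 + eps) n) s
          <= Rpower 2 (C * sqrt (ln (INR n) * ln (ln (INR n)))).
Proof.
  intros eps Heps.
  set (dl := Rmin eps 1).
  assert (Hdl0 : 0 < dl) by (apply Rmin_glb_lt; lra).
  assert (Hdl1 : dl <= 1) by apply Rmin_r.
  assert (Hdle : dl <= eps) by apply Rmin_l.
  set (R0 := Z.to_nat (up (4 / dl))).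
  assert (HR0 : 4 / dl < INR R0 <= 4 / dl + 1).
  { apply ceil_nat. apply Rlt_le. apply Rdiv_lt_0_compat; lra. }
  assert (H4dl : 4 <= 4 / dl).
  { apply (Rmult_le_reg_r dl); auto. replace (4 / dl * dl) with 4 by (field; lra). nra. }
  set (lR := ln (INR R0)).
  assert (HlR : 0 <= lR). { unfold lR. rewrite <- ln_1. apply ln_mono; lra. }
  set (Q := 2 * (2 * lR + 3)).
  set (K := 2 * (16 * (1 + eps) / dl) + 2).
  assert (HK : 1 <= K).
  { unfold K. assert (0 < 16 * (1 + eps) / dl) by (apply Rdiv_lt_0_compat; lra). lra. }
  assert (HlK : 0 <= ln K) by (rewrite <- ln_1; apply ln_mono; lra).
  set (L0 := exp 1 + 4 * Q ^ 4 + 2 * Rabs (ln (16 / dl))).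
  assert (Hln2 : 0 < ln 2) by (pose proof ln_lt_2; lra).
  exists ((ln K + 8 + 2 * lR) / ln 2), (Z.to_nat (up (exp L0 + 16 / dl))).
  intros n Hn.
  set (N := INR n).
  assert (HN : exp L0 + 16 / dl < N).
  { assert (0 <= exp L0 + 16 / dl).
    { pose proof (exp_pos L0). assert (0 < 16 / dl) by (apply Rdiv_lt_0_compat; lra). lra. }
    destruct (ceil_nat _ H) as [H1 _]. apply le_INR in Hn. unfold N. lra. }
  assert (H16 : 0 < 16 / dl) by (apply Rdiv_lt_0_compat; lra).
  assert (HNpos : 0 < N) by (pose proof (exp_pos L0); lra).
  assert (HdN : 16 <= dl * N).
  { assert (16 / dl * dl = 16) by (field; lra).
    assert (16 / dl <= N) by (pose proof (exp_pos L0); lra). nra. }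
  set (L := ln N).
  assert (HL0 : L0 < L).
  { unfold L. rewrite <- (ln_exp L0). apply ln_increasing. apply exp_pos. pose proof H16; lra. }
  assert (HQ4 : 0 <= 4 * Q ^ 4) by (apply Rmult_le_pos; [lra| apply pow_le; unfold Q; lra]).
  assert (He1 : exp 1 <= L) by (pose proof (Rabs_pos (ln (16 / dl))); unfold L0 in HL0; lra).
  assert (He1' : 2 < exp 1) by (pose proof (exp_ineq1 1 ltac:(lra)); lra).
  assert (HLpos : 0 < L) by lra.
  set (w := ln L).
  assert (Hw1 : 1 <= w). { unfold w. rewrite <- (ln_exp 1). apply ln_mono; auto. apply exp_pos. }
  assert (HwL : w <= L - 1) by (apply ln_le_sub1; auto).
  set (S := sqrt (L * w)).
  assert (HS2 : S * S = L * w) by (apply sqrt_sqrt; nra).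
  assert (HS0 : 0 <= S) by apply sqrt_pos.
  assert (HS1 : 1 <= S) by nra.
  set (u := sqrt (L / w)).
  assert (Hu2 : u * u = L / w) by (apply sqrt_sqrt; apply Rlt_le; apply Rdiv_lt_0_compat; lra).
  assert (Hu0 : 0 <= u) by apply sqrt_pos.
  assert (HLw : 1 <= L / w).
  { apply (Rmult_le_reg_r w); [lra|]. replace (L / w * w) with L by (field; lra). lra. }
  assert (Hu1 : 1 <= u) by nra.
  assert (HuS : u * S = L).
  { apply sq_eq; try nra.
    replace (u * S * (u * S)) with ((u * u) * (S * S)) by ring. rewrite Hu2, HS2. field. lra. }
  assert (Huw : u * w = S).
  { apply sq_eq; try nra.
    replace (u * w * (u * w)) with ((u * u) * (w * w)) by ring. rewrite Hu2, HS2. field. lra. }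
  assert (HuleS : u <= S) by nra.
  assert (HQpos : 6 <= Q) by (unfold Q; lra).
  assert (HSQ : Q * S <= L).
  { set (v := sqrt L).
    assert (Hv2 : v * v = L) by (apply sqrt_sqrt; lra).
    assert (Hv0 : 0 <= v) by apply sqrt_pos.
    assert (HQ4L : 4 * Q ^ 4 <= L) by (pose proof (exp_pos 1); pose proof (Rabs_pos (ln (16 / dl))); unfold L0 in HL0; lra).
    assert (Hq4 : Q ^ 4 = (Q * Q) * (Q * Q)) by ring.
    assert (Hv : 2 * (Q * Q) <= v) by nra.
    assert (Hwv : w <= 2 * v).
    { assert (Hvp : 0 < v) by nra.
      unfold w. rewrite <- Hv2. rewrite ln_mult by auto. pose proof (ln_le_sub1 v Hvp). lra. }
    assert (HwQ : w * (Q * Q) <= L) by nra.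
    apply sq_le; [nra|lra|]. replace (Q * S * (Q * S)) with ((S * S) * (Q * Q)) by ring. rewrite HS2. nra. }
  set (d := Z.to_nat (up u)).
  assert (Hd : u < INR d <= u + 1) by (apply ceil_nat; lra).
  assert (Hd1 : (1 <= d)%nat). { assert (INR 0 < INR d) by (simpl; lra). apply INR_lt in H. lia. }
  assert (Hd2S : INR d <= 2 * S) by lra.
  assert (HR0n : (4 < R0)%nat). { assert (INR 4 < INR R0) by (simpl; lra). apply INR_lt in H. auto. }
  set (r := (R0 * d)%nat).
  assert (Hr : INR r = INR R0 * INR d) by apply mult_INR.
  assert (Hr5 : (5 <= r)%nat) by (unfold r; nia).
  assert (HINRr5 : 5 <= INR r) by (apply le_INR in Hr5; simpl in Hr5; lra).
  assert (HINRd : 1 <= INR d) by (apply (le_INR 1); auto).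
  assert (HINRR0 : 4 < INR R0) by lra.
  assert (Hln2le : ln 2 <= 1).
  { apply Rle_trans with (ln (exp 1)); [apply ln_mono; lra | rewrite ln_exp; lra]. }
  assert (Hlnu : 2 * ln u <= w).
  { replace (2 * ln u) with (ln (u * u)) by (rewrite ln_mult by lra; ring).
    rewrite Hu2. assert (ln (L / w) <= ln L).
    { apply ln_mono. apply Rdiv_lt_0_compat; lra.
      apply (Rmult_le_reg_r w); [lra|]. replace (L / w * w) with L by (field; lra). nra. }
    exact H. }
  assert (Hlnd : ln (INR d) <= 1 + w / 2).
  { assert (ln (INR d) <= ln (2 * u)) by (apply ln_mono; lra).
    rewrite ln_mult in H by lra. lra. }
  assert (Hlnd0 : 0 <= ln (INR d)) by (rewrite <- ln_1; apply ln_mono; lra).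
  assert (Hdlr : INR d * ln (INR r) <= (2 * lR + 3) * S).
  { rewrite Hr, ln_mult by lra. fold lR.
    assert (INR d * lR <= 2 * S * lR) by nra.
    assert (INR d * ln (INR d) <= 2 * u * (1 + w / 2)) by nra.
    nra. }
  set (E := exp (L / 2)).
  assert (HEE : E * E = N).
  { unfold E. rewrite <- exp_plus. replace (L / 2 + L / 2) with L by field. unfold L. apply exp_ln; auto. }
  assert (HE0 : 0 < E) by apply exp_pos.
  assert (HINRr : 0 < INR r) by nra.
  assert (Hrd : INR r ^ d <= E).
  { apply ln_le_inv. apply pow_lt; auto. auto.
    rewrite ln_pow by auto. unfold E. rewrite ln_exp. unfold Q in HSQ. nra. }
  assert (HE16 : 16 / dl <= E).
  { apply ln_le_inv; auto. unfold E. rewrite ln_exp.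
    pose proof (Rle_abs (ln (16 / dl))). pose proof (exp_pos 1). unfold L0 in HL0. lra. }
  assert (HEdN : E <= dl * N / 16).
  { rewrite <- HEE. assert (16 / dl * dl = 16) by (field; lra). nra. }
  set (X := Z.to_nat (Int_part (dl * N / 8))).
  assert (HX : INR X <= dl * N / 8 /\ dl * N / 8 - 1 < INR X) by (apply floor_nat; nra).
  assert (HrX : (r ^ d <= X)%nat).
  { apply INR_le. rewrite pow_INR. lra. }
  destruct (find_k (fun k => (r * k) ^ d)%nat X (Datatypes.S X)) as (k & Hk1 & Hk2 & Hk3).
  { lia. }
  { rewrite Nat.mul_1_r. auto. }
  { assert (r * Datatypes.S X <= (r * Datatypes.S X) ^ d)%nat.
    { rewrite <- (Nat.pow_1_r (r * Datatypes.S X)) at 1. apply Nat.pow_le_mono_r; nia. }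
    nia. }
  set (B := (r * k)%nat).
  assert (HkB : (k < B)%nat) by (unfold B; nia).
  set (x := (B ^ d)%nat).
  assert (Hx0 : (x <> 0)%nat) by (unfold x; apply Nat.pow_nonzero; lia).
  set (m := num_cells (1 + eps) n).
  set (Btop := (m / x)%nat).
  assert (Hm : INR m <= (1 + eps) * N /\ (1 + eps) * N - 1 < INR m).
  { unfold m, num_cells. apply floor_nat. apply Rmult_le_pos; [lra | apply pos_INR]. }
  assert (HxX : (x <= X)%nat) by auto.
  assert (HXx : (X < 2 ^ d * x)%nat).
  { assert ((r * Datatypes.S k) ^ d <= (2 * B) ^ d)%nat by (apply Nat.pow_le_mono_l; unfold B; nia).
    rewrite (Nat.pow_mul_l 2 B d) in H. fold x in H. lia. }
  assert (Hmx : (m < x * (Btop + 1))%nat).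
  { pose proof (Nat.div_mod m x Hx0). pose proof (Nat.mod_upper_bound m x Hx0). fold Btop in H. nia. }
  assert (Hmx2 : (Btop * x <= m)%nat).
  { pose proof (Nat.div_mod m x Hx0). fold Btop in H. nia. }
  assert (HINRx : INR x = INR B ^ d) by apply pow_INR.
  assert (HINRB : INR B = INR r * INR k) by apply mult_INR.
  assert (HINRk : 1 <= INR k) by (apply (le_INR 1); auto).
  assert (HINRx1 : 1 <= INR x) by (rewrite HINRx; apply pow_R1_Rle; nra).
  set (a := (1 - 1 / INR r) ^ d).
  assert (Hy : INR ((B - k) ^ d) = INR x * a).
  { rewrite pow_INR, minus_INR by lia. rewrite HINRx. unfold a. rewrite <- Rpow_mult_distr.
    f_equal. rewrite HINRB. field. lra. }
  assert (Ha : 1 - dl / 4 <= a).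
  { unfold a. eapply Rle_trans; [|apply bernoulli].
      + rewrite Hr. replace (INR d * (1 / (INR R0 * INR d))) with (1 / INR R0) by (field; lra).
        assert (1 / INR R0 <= dl / 4).
        { apply (Rmult_le_reg_r (INR R0 * 4)); [lra|].
          replace (1 / INR R0 * (INR R0 * 4)) with 4 by (field; lra).
          replace (dl / 4 * (INR R0 * 4)) with (dl * INR R0) by field.
          assert (4 / dl * dl = 4) by (field; lra). nra. }
        lra.
      + split. apply Rlt_le, Rdiv_lt_0_compat; lra.
        apply (Rmult_le_reg_r (INR r)); [lra|]. replace (1 / INR r * INR r) with 1 by (field; lra). lra. }
  assert (Ha0 : 0 < a) by lra.
  assert (HxR : INR x <= dl * N / 8) by (apply le_INR in HxX; lra).
  assert (HXxR : INR X < 2 ^ d * INR x).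
  { apply lt_INR in HXx. rewrite mult_INR, pow_INR in HXx. simpl INR in HXx. replace (1 + 1) with 2 in HXx by ring. lra. }
  assert (HmxR : INR m < INR x * (INR Btop + 1)).
  { apply lt_INR in Hmx. rewrite mult_INR, plus_INR in Hmx. simpl INR in Hmx. lra. }
  assert (Hmx2R : INR Btop * INR x <= INR m).
  { apply le_INR in Hmx2. rewrite mult_INR in Hmx2. lra. }
  assert (HBtop0 : 0 <= INR Btop) by apply pos_INR.
  assert (EdN' : dl * N <= N) by (rewrite <- (Rmult_1_l N) at 2; apply Rmult_le_compat_r; lra).
  assert (Hii : (n + (B - k) ^ d <= (B - k) ^ d * Btop)%nat).
  { apply INR_le. rewrite plus_INR, mult_INR, Hy. fold N.
    assert (E0 : INR x * (INR Btop + 1) = INR x * INR Btop + INR x) by ring.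
    assert (H1 : INR x * INR Btop - INR x > INR m - 2 * INR x) by lra.
    assert (Ee : (1 + eps) * N = N + eps * N) by ring.
    assert (Ede : dl * N <= eps * N) by (apply Rmult_le_compat_r; lra).
    assert (H2 : INR m - 2 * INR x >= N + 3 * (dl * N) / 4 - 1) by lra.
    assert (EdN : dl * N <= N) by (rewrite <- (Rmult_1_l N) at 2; apply Rmult_le_compat_r; lra).
    assert (H3 : N + 3 * (dl * N) / 4 - 1 > 0) by lra.
    assert (H4 : a * (INR m - 2 * INR x) <= a * (INR x * INR Btop - INR x)) by (apply Rmult_le_compat_l; lra).
    assert (H5 : (1 - dl / 4) * (INR m - 2 * INR x) <= a * (INR m - 2 * INR x)) by (apply Rmult_le_compat_r; lra).
    assert (H5' : (1 - dl / 4) * (N + 3 * (dl * N) / 4 - 1) <= (1 - dl / 4) * (INR m - 2 * INR x))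
      by (apply Rmult_le_compat_l; lra).
    assert (Edd : dl * (dl * N) <= dl * N) by (rewrite <- (Rmult_1_l (dl * N)) at 2; apply Rmult_le_compat_r; lra).
    assert (E6 : (1 - dl / 4) * (N + 3 * (dl * N) / 4 - 1) = N + (dl * N) / 2 - 3 * (dl * (dl * N)) / 16 - 1 + dl / 4) by field.
    assert (E7 : a * (INR x * INR Btop - INR x) = INR x * a * INR Btop - INR x * a) by ring.
    lra. }
  assert (Hiii : (Btop * B ^ d <= m)%nat) by (fold x; auto).
  destruct (assemble B k d Btop n m Hk1 HkB Hii Hiii) as [A HA].
  exists A. intros s Hlen Hs. destruct (HA s Hlen Hs) as [HV HC]. split; auto.
  eapply Rle_trans; [exact HC|].
  replace (INR B / INR k) with (INR r) by (rewrite HINRB; field; lra).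

  set (P := INR d * INR B * INR r ^ d).
  assert (HB1 : 1 <= INR B) by (rewrite HINRB; apply one_le_mul; lra).
  assert (Hrd1 : 1 <= INR r ^ d) by (apply pow_R1_Rle; lra).
  assert (HdB1 : 1 <= INR d * INR B) by (apply one_le_mul; lra).
  assert (HP1 : 1 <= P) by (unfold P; apply one_le_mul; lra).
  assert (H2d : 1 <= 2 ^ d) by (apply pow_R1_Rle; lra).
  set (K1 := 16 * (1 + eps) / dl).
  assert (HBtopb : INR Btop <= K1 * 2 ^ d).
  { assert (HdNx : dl * N <= 16 * 2 ^ d * INR x) by lra.
    assert (T1 : INR Btop * (dl * N) <= INR Btop * (16 * 2 ^ d * INR x)) by (apply Rmult_le_compat_l; lra).
    assert (T2 : INR Btop * (16 * 2 ^ d * INR x) = 16 * 2 ^ d * (INR Btop * INR x)) by ring.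
    assert (T3 : 16 * 2 ^ d * (INR Btop * INR x) <= 16 * 2 ^ d * ((1 + eps) * N)) by (apply Rmult_le_compat_l; lra).
    unfold K1. apply (Rmult_le_reg_r (dl * N)); [apply Rmult_lt_0_compat; lra|].
    replace (16 * (1 + eps) / dl * 2 ^ d * (dl * N)) with (16 * 2 ^ d * ((1 + eps) * N)) by (field; lra).
    lra. }
  assert (HK1 : 0 <= K1) by (unfold K1; apply Rlt_le, Rdiv_lt_0_compat; lra).
  assert (Hcost1 : INR Btop * (P + 1) + 2 <= K * (2 ^ d * P)).
  { assert (U1 : INR Btop * (P + 1) <= K1 * 2 ^ d * (P + 1)) by (apply Rmult_le_compat_r; lra).
    assert (U2 : 1 <= 2 ^ d * P) by (apply one_le_mul; lra).
    assert (U3 : 0 <= K1 * 2 ^ d) by (apply Rmult_le_pos; lra).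
    assert (U4 : K1 * 2 ^ d * (P + 1) <= K1 * 2 ^ d * (2 * P)) by (apply Rmult_le_compat_l; lra).
    assert (U5 : K * (2 ^ d * P) = 2 * (K1 * 2 ^ d * P) + 2 * (2 ^ d * P)) by (unfold K, K1; ring).
    assert (U6 : K1 * 2 ^ d * (2 * P) = 2 * (K1 * 2 ^ d * P)) by ring.
    lra. }
  eapply Rle_trans; [exact Hcost1|].
  assert (E1 : K <= exp (ln K * S)).
  { rewrite <- (exp_ln K) at 1 by lra. apply exp_mono.
    rewrite <- (Rmult_1_r (ln K)) at 1. apply Rmult_le_compat_l; lra. }
  assert (E2 : 2 ^ d <= exp (2 * S)) by (eapply Rle_trans; [apply pow2_le_exp | apply exp_mono; lra]).
  assert (E3 : INR d <= exp (2 * S)) by (eapply Rle_trans; [apply exp_ge_id | apply exp_mono; lra]).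
  assert (E4 : INR B <= exp S).
  { apply ln_le_inv; [lra|apply exp_pos|]. rewrite ln_exp.
    assert (ln (INR x) <= L).
    { unfold L. apply ln_mono; [lra|]. lra. }
    rewrite HINRx, ln_pow in H by lra.
    assert (V1 : u * S < INR d * S) by (apply Rmult_lt_compat_r; lra).
    assert (V2 : INR d * ln (INR B) < INR d * S) by lra.
    apply Rlt_le. apply (Rmult_lt_reg_l (INR d)); lra. }
  assert (E5 : INR r ^ d <= exp ((2 * lR + 3) * S)).
  { apply ln_le_inv; [apply pow_lt; lra|apply exp_pos|]. rewrite ln_exp, ln_pow by lra. lra. }
  assert (Hexp : Rpower 2 ((ln K + 8 + 2 * lR) / ln 2 * S)
                 = exp (ln K * S) * (exp (2 * S) * (exp (2 * S) * exp S * exp ((2 * lR + 3) * S)))).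
  { unfold Rpower. rewrite <- !exp_plus. f_equal. field. lra. }
  rewrite Hexp. unfold P.
  assert (0 <= INR d) by lra.
  apply Rmult_le_compat; [lra | | exact E1 |].
  { apply Rmult_le_pos; [lra|]. apply Rmult_le_pos; lra. }
  apply Rmult_le_compat; [lra | apply Rmult_le_pos; lra | exact E2 |].
  apply Rmult_le_compat; [lra | lra | | exact E5].
  apply Rmult_le_compat; [lra | lra | exact E3 | exact E4].
Qed.
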